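(* Let $n\in\mathbb N$ (positive integer). In the vertex operator algebra $N_2(n-2,0)$ the vector $$v_{2,n}=\sum_{t=0}^{2n}\frac1{t!}\,e_{\epsilon_1-\epsilon_3}(-1)^t\,e_{\epsilon_2-\epsilon_3}(-1)^{2n-t}\,f_{\epsilon_1-\epsilon_2}(0)^t\,e_{\epsilon_1-\epsilon_2}(-1)^n\mathbf 1$$ is a singular vector.
   Context: $\mathfrak g=\mathfrak{sl}_3(\mathbb C)$ with Cartan subalgebra of traceless diagonal matrices, simple roots $\alpha_1=\epsilon_1-\epsilon_2$, $\alpha_2=\epsilon_2-\epsilon_3$, highest root $\theta=\epsilon_1-\epsilon_3$. Root vectors: $e_{\epsilon_1-\epsilon_2}=E_{12}$, $e_{\epsilon_2-\epsilon_3}=E_{23}$, $e_{\epsilon_1-\epsilon_3}=-E_{13}$, $f_{\epsilon_1-\epsilon_2}=E_{21}$, $f_{\epsilon_2-\epsilon_3}=E_{32}$, $f_{\epsilon_1-\epsilon_3}=-E_{31}$ (so $[e_{\epsilon_1-\epsilon_2},e_{\epsilon_2-\epsilon_3}]=-e_{\epsilon_1-\epsilon_3}$). The affine Lie algebra $\hat{\mathfrak g}=\mathfrak g\otimes\mathbb C[t,t^{-1}]\oplus\mathbb Cc$ has bracket $[x(m),y(n)]=[x,y](m+n)+m\delta_{m+n,0}\operatorname{tr}(xy)c$, $x(m)=x\otimes t^m$. $N_2(k,0)=U(\hat{\mathfrak g})\otimes_{U(\mathfrak g\otimes\mathbb C[t]\oplus\mathbb Cc)}\mathbb C$ with $\mathfrak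 g\otimes\mathbb C[t]$ acting by $0$ and $c$ by $k$; it is a vertex operator algebra for $k\neq -3$, with vacuum $\mathbf 1=1\otimes 1$. A singular vector is a weight vector annihilated by $\mathfrak n_+\otimes 1$ and $\mathfrak g\otimes t\mathbb C[t]$ (equivalently by $e_{\alpha_1}(0),e_{\alpha_2}(0),f_\theta(1)$). *)

(* Defs.v *)
From HB Require Import structures.
From mathcomp Require Import all_boot all_order all_algebra.
From mathcomp Require Import reals.
From mathcomp Require Import complex.
Set Implicit Arguments. Unset Strict Implicit. Unset Printing Implicit Defensive.
Import Order.TTheory GRing.Theory Num.Theory.
Local Open Scope ring_scope.

Definition CC (R : realType) := R[i].

Section Sl3.
Variable R : realType.
Local Notation C := (CC R).

Definition in_sl3 (x : 'M[C]_3) : Prop := \tr x = 0.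
Definition lie_br (x y : 'M[C]_3) : 'M[C]_3 := x *m y - y *m x.

Definition in_cartan (h : 'M[C]_3) : Prop :=
  in_sl3 h /\ forall i j : 'I_3, i != j -> h i j = 0.
Definition in_nplus (x : 'M[C]_3) : Prop :=
  forall i j : 'I_3, (j <= i)%N -> x i j = 0.

Definition i0 : 'I_3 := @Ordinal 3 0 isT.
Definition i1 : 'I_3 := @Ordinal 3 1 isT.
Definition i2 : 'I_3 := @Ordinal 3 2 isT.

(* Root vectors, with the sign conventions of the paper. *)
Definition e12 : 'M[C]_3 := delta_mx i0 i1.
Definition e23 : 'M[C]_3 := delta_mx i1 i2.
Definition e13 : 'M[C]_3 := - delta_mx i0 i2.
Definition f12 : 'M[C]_3 := delta_mx i1 i0.
Definition f23 : 'M[C]_3 := delta_mx i2 i1.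
Definition f13 : 'M[C]_3 := - delta_mx i2 i0.

(* A module over the affine Lie algebra  g (x) C[t,t^-1] (+) C c  on which the
   central element c acts by the scalar k.  act x m  is the operator of x(m)=x (x) t^m. *)
Definition affine_module (k : C) (M : lmodType C) (act : 'M[C]_3 -> int -> M -> M)
  : Prop :=
  [/\ (forall (a : C) (x y : 'M[C]_3) (m : int) (v : M), in_sl3 x -> in_sl3 y ->
         act (a *: x + y) m v = a *: act x m v + act y m v),
      (forall (a : C) (x : 'M[C]_3) (m : int) (u v : M), in_sl3 x ->
         act x m (a *: u + v) = a *: act x m u + act x m v) &
      (forall (x y : 'M[C]_3) (m n : int) (v : M), in_sl3 x -> in_sl3 y ->
         act x m (act y n v) - act y n (act x m v)
         = act (lie_br x y) (m + n) v
           + ((m%:~R * (if m + n == 0 then 1 else 0) * \tr (x *m y) * k) : C) *: v)].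

Definition vacuum_like (M : lmodType C) (act : 'M[C]_3 -> int -> M -> M) (w : M)
  : Prop := forall (x : 'M[C]_3) (m : int), in_sl3 x -> 0 <= m -> act x m w = 0.

Definition singular (M : lmodType C) (act : 'M[C]_3 -> int -> M -> M) (v : M)
  : Prop :=
  [/\ exists lam : 'M[C]_3 -> C, forall h, in_cartan h -> act h 0 v = lam h *: v,
      (forall x, in_nplus x -> act x 0 v = 0) &
      (forall (x : 'M[C]_3) (m : int), in_sl3 x -> 0 < m -> act x m v = 0)].

Definition v2n (M : lmodType C) (act : 'M[C]_3 -> int -> M -> M) (n : nat) (w : M)
  : M :=
  \sum_(t < (2 * n).+1)
     ((t`!)%:R)^-1 *:
       iter t (act e13 (-1)) (iter (2 * n - t) (act e23 (-1))
         (iter t (act f12 0) (iter n (act e12 (-1)) w))).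

End Sl3.

(* Main.v *)
Require Import Defs.
From HB Require Import structures.
From mathcomp Require Import all_boot all_order all_algebra.
From mathcomp Require Import reals complex.
From mathcomp Require Import ring zify.
Import Order.TTheory GRing.Theory Num.Theory.
Local Open Scope ring_scope.
Set Implicit Arguments. Unset Strict Implicit.

Section Generic.
Variable R : realType.
Local Notation C := (CC R).
Variable M : lmodType C.

Definition lin (f : M -> M) := forall (a : C) u v, f (a *: u + v) = a *: f u + f v.

Lemma lin0 f (Hf : lin f) : f 0 = 0.
Proof.
 have := Hf 1 0 0; rewrite scaler0 add0r scale1r => H.
by apply: (addrI (f 0)); rewrite addr0 -H.
Qed.

Lemma linD f (Hf : lin f) u v : f (u + v) = f u + f v.
Proof. by have := Hf 1 u v; rewrite !scale1r. Qed.

Lemma linZ f (Hf : lin f) a u : f (a *: u) = a *: f u.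
Proof. by have := Hf a u 0; rewrite addr0 (lin0 Hf) addr0. Qed.

Lemma linN f (Hf : lin f) u : f (- u) = - f u.
Proof. by rewrite -scaleN1r (linZ Hf) scaleN1r. Qed.

Lemma linB f (Hf : lin f) u v : f (u - v) = f u - f v.
Proof. by rewrite (linD Hf) (linN Hf). Qed.

Lemma lin_iter f j : lin f -> lin (iter j f).
Proof.
move=> Hf; elim: j => [|j IH] a u v //=.
by rewrite IH Hf.
Qed.

Lemma lin_sum f (Hf : lin f) N (F : 'I_N -> M) :
  f (\sum_(i < N) F i) = \sum_(i < N) f (F i).
Proof.
apply: (big_morph f (linD Hf) (lin0 Hf)).
Qed.

Lemma iter0 f (Hf : lin f) j : iter j f 0 = 0.
Proof. by rewrite (lin0 (lin_iter j Hf)). Qed.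

Lemma comm_iter (D X : M -> M) j u :
  (forall u, D (X u) = X (D u)) -> D (iter j X u) = iter j X (D u).
Proof. by move=> H; elim: j => [|j IH] //=; rewrite H IH. Qed.

Lemma commY_iter (D X Y : M -> M) j u : lin X ->
  (forall u, D (X u) = X (D u) + Y u) -> (forall u, Y (X u) = X (Y u)) ->
  D (iter j X u) = iter j X (D u) + j%:R *: iter j.-1 X (Y u).
Proof.
move=> HX H HY; elim: j => [|j IH]; first by rewrite scale0r addr0.
rewrite /= H IH (linD HX) (linZ HX) (comm_iter _ _ HY).
case: j {IH} => [|j] /=; first by rewrite scale0r addr0 scale1r.
rewrite -addrA; congr (_ + _); rewrite -[X in _ + X]scale1r -scalerDl.
by rewrite natr1.
Qed.

Lemma commY_iter' (X A Y : M -> M) t u : lin X -> lin Y ->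
  (forall u, X (A u) = A (X u) + Y u) -> (forall u, X (Y u) = Y (X u)) ->
  iter t X (A u) = A (iter t X u) + t%:R *: Y (iter t.-1 X u).
Proof.
move=> HX HY H HXY; elim: t => [|t IH]; first by rewrite /= scale0r addr0.
rewrite /= IH (linD HX) H (linZ HX) HXY -addrA; congr (_ + _).
case: t {IH} => [|t] /=; first by rewrite scale0r addr0 scale1r.
by rewrite -[X in X + _]scale1r -scalerDl addrC natr1. Qed.
Lemma sl2_iter (D F H : M -> M) (lam : C) x t : lin F ->
  (forall u, D (F u) = F (D u) + H u) ->
  (forall u, H (F u) = F (H u) - 2%:R *: F u) ->
  D x = 0 -> H x = lam *: x ->
  D (iter t F x) = (t%:R * (lam - t%:R + 1)) *: iter t.-1 F x.
Proof.
move=> HF HD HH Dx Hx.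
have Hw : forall j, H (iter j F x) = (lam - 2%:R * j%:R) *: iter j F x.
  elim=> [|j IH] /=; first by rewrite Hx mulr0 subr0.
  rewrite HH IH (linZ HF) -scalerBl; congr (_ *: _).
  by rewrite ?mulrSr; ring.
elim: t => [|t IH] /=; first by rewrite Dx mul0r scale0r.
rewrite HD IH Hw (linZ HF).
case: t {IH} => [|t] /=; first by rewrite mul0r scale0r add0r; congr (_ *: _); ring.
rewrite -scalerDl; congr (_ *: _); rewrite ?mulrSr; ring.
Qed.

Lemma eigen_iter (H X : M -> M) (c mu : C) j u : lin X ->
  (forall u, H (X u) = X (H u) + c *: X u) -> H u = mu *: u ->
  H (iter j X u) = (mu + j%:R * c) *: iter j X u.
Proof.
move=> HX HH Hu; elim: j => [|j IH] /=; first by rewrite Hu mul0r addr0.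
rewrite HH IH (linZ HX) -scalerDl; congr (_ *: _); rewrite ?mulrSr; ring.
Qed.

Lemma theta_iter (D X H : M -> M) (c k mu : C) (cf : nat -> C) t u : lin X ->
  (forall u, H (X u) = X (H u) + c *: X u) ->
  (forall u, D (X u) = X (D u) + H u + k *: u) ->
  H u = mu *: u -> cf 0%N = 0 -> (forall t, cf t.+1 = cf t + mu + t%:R * c + k) ->
  D (iter t X u) = iter t X (D u) + cf t *: iter t.-1 X u.
Proof.
move=> HX HH HD Hu c0 cS; elim: t => [|t IH]; first by rewrite c0 scale0r addr0.
rewrite iterS HD IH (linD HX) (linZ HX) (eigen_iter _ HX HH Hu) -!addrA; congr (_ + _).
rewrite cS; case: t {IH} => [|t] /=.
  by rewrite c0 scale0r add0r -scalerDl; congr (_ *: _); ring.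
rewrite -!scalerDl; congr (_ *: _); rewrite -(natr1 t); ring.
Qed.


Lemma ac5 (a b c d e : M) : a + b + (c + d) + e = a + (c + b) + (e + d).
Proof. rewrite -!addrA; congr (_ + _); by rewrite addrCA [d + e]addrC. Qed.

Lemma ad3_iter (D X X1 X2 : M -> M) m u : lin D ->
  (forall u, D (X u) = X (D u) + X1 u) ->
  (forall u, D (X1 u) = X1 (D u) + X2 u) ->
  (forall u, D (X2 u) = X2 (D u)) -> lin X1 -> lin X2 ->
  iter m.+2 D (X u) = X (iter m.+2 D u) + m.+2%:R *: X1 (iter m.+1 D u)
     + 'C(m.+2, 2)%:R *: X2 (iter m D u).
Proof.
move=> HD H1 H2 H3 L1 L2; elim: m => [|m IH].
  by rewrite /= H1 (linD HD) H1 H2 bin2 /= scale1r mulr2n scalerDl scale1r !addrA.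
rewrite [in LHS]iterS IH !(linD HD) !(linZ HD) H1 H2 H3.
have -> : m.+3%:R *: X1 (iter m.+2 D u) = m.+2%:R *: X1 (iter m.+2 D u) + X1 (iter m.+2 D u).
  by rewrite -(natr1 m.+2) scalerDl scale1r.
have -> : 'C(m.+3, 2)%:R *: X2 (iter m.+1 D u) = 'C(m.+2, 2)%:R *: X2 (iter m.+1 D u) + m.+2%:R *: X2 (iter m.+1 D u).
  by rewrite (binS m.+2 1) bin1 natrD scalerDl.
by rewrite scalerDr ac5.
Qed.

Lemma tele N (g a : nat -> M) : a 0%N = g 0%N ->
  (forall t, (t < N)%N -> a t.+1 = g t.+1 - g t) ->
  \sum_(t < N.+1) a t = g N.
Proof.
move=> H0 HS; elim: N HS => [|N IH] HS; first by rewrite big_ord1.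
rewrite big_ord_recr /= IH; last by move=> t Ht; apply: HS; apply: ltnW.
by rewrite HS // addrC subrK.
Qed.

End Generic.

Lemma ord3P (i : 'I_3) : [\/ i = i0, i = i1 | i = i2].
Proof.
case: i => [[|[|[|?]]] Hi] //.
- by constructor 1; apply: val_inj.
- by constructor 2; apply: val_inj.
- by constructor 3; apply: val_inj.
Qed.

Lemma sum3 (V : nmodType) (F : 'I_3 -> V) : \sum_(i < 3) F i = F i0 + F i1 + F i2.
Proof.
rewrite !big_ord_recr big_ord0 /= add0r; congr (_ + _ + _); congr F; exact: val_inj.
Qed.

Section Mx.
Variable R : realType.
Local Notation C := (CC R).
Local Notation e12 := (e12 R). Local Notation e23 := (e23 R). Local Notation e13 := (e13 R).
Local Notation f12 := (f12 R). Local Notation f23 := (f23 R). Local Notation f13 := (f13 R).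

Definition H1 : 'M[C]_3 := delta_mx i0 i0 - delta_mx i1 i1.
Definition H2 : 'M[C]_3 := delta_mx i1 i1 - delta_mx i2 i2.
Definition HA : 'M[C]_3 := delta_mx i0 i0 - delta_mx i2 i2.
Definition HT : 'M[C]_3 := delta_mx i2 i2 - delta_mx i0 i0.

Ltac mxsolve := rewrite /lie_br /e12 /e23 /e13 /f12 /f23 /f13 /H1 /H2 /HA /HT;
  apply/matrixP => i j; have [->|->|->] := ord3P i; have [->|->|->] := ord3P j;
  rewrite ?mxE ?sum3 ?mxE /= ?mulr1n ?mulr0n; ring.
Ltac trsolve := rewrite /in_sl3 /mxtrace /lie_br /e12 /e23 /e13 /f12 /f23 /f13 /H1 /H2 /HA /HT;
  rewrite ?sum3 ?mxE ?sum3 ?mxE /= ?mulr1n ?mulr0n; ring.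

Lemma sl3_br (x y : 'M[C]_3) : in_sl3 (lie_br x y).
Proof. by rewrite /in_sl3 /lie_br raddfB /= mxtrace_mulC subrr. Qed.
Lemma sl3_lin a (x y : 'M[C]_3) : in_sl3 x -> in_sl3 y -> in_sl3 (a *: x + y).
Proof. by rewrite /in_sl3 raddfD /= linearZ /= => -> ->; rewrite mulr0 addr0. Qed.
Lemma sl3_0 : in_sl3 (R:=R) 0.
Proof. exact: mxtrace0. Qed.
Lemma sl3_e12 : in_sl3 e12. Proof. trsolve. Qed.
Lemma sl3_e23 : in_sl3 e23. Proof. trsolve. Qed.
Lemma sl3_e13 : in_sl3 e13. Proof. trsolve. Qed.
Lemma sl3_f12 : in_sl3 f12. Proof. trsolve. Qed.
Lemma sl3_f23 : in_sl3 f23. Proof. trsolve. Qed.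
Lemma sl3_f13 : in_sl3 f13. Proof. trsolve. Qed.
Lemma sl3_H1 : in_sl3 H1. Proof. trsolve. Qed.
Lemma sl3_H2 : in_sl3 H2. Proof. trsolve. Qed.

Lemma br_self (x : 'M[C]_3) : lie_br x x = 0. Proof. exact: subrr. Qed.
Lemma br1 : lie_br e12 e13 = 0. Proof. mxsolve. Qed.
Lemma br3 : lie_br e12 e23 = - e13. Proof. mxsolve. Qed.
Lemma br2 : lie_br (lie_br e12 e23) e23 = 0. Proof. rewrite br3; mxsolve. Qed.
Lemma brH1 : lie_br e12 f12 = H1. Proof. mxsolve. Qed.
Lemma brH2 : lie_br e23 f23 = H2. Proof. mxsolve. Qed.
Lemma br7 : lie_br e23 e13 = 0. Proof. mxsolve. Qed.
Lemma br7' : lie_br e13 e23 = 0. Proof. mxsolve. Qed.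
Lemma br8 : lie_br e23 f12 = 0. Proof. mxsolve. Qed.
Lemma br9 : lie_br e23 e12 = e13. Proof. mxsolve. Qed.
Lemma br10 : lie_br e13 e12 = 0. Proof. mxsolve. Qed.
Lemma br11 : lie_br f12 e13 = - e23. Proof. mxsolve. Qed.
Lemma br12 : lie_br f12 (- e23) = 0. Proof. mxsolve. Qed.
Lemma brf12e12 : lie_br f12 e12 = - H1. Proof. mxsolve. Qed.
Lemma brf12H1 : lie_br f12 (- H1) = (-2) *: f12. Proof. mxsolve. Qed.
Lemma br13 : lie_br f12 (lie_br f12 (lie_br f12 e12)) = 0.
Proof. rewrite brf12e12 brf12H1; mxsolve. Qed.
Lemma br14 : lie_br f13 f12 = 0. Proof. mxsolve. Qed.
Lemma tr1 : \tr (f13 *m e12) = 0. Proof. trsolve. Qed.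
Lemma brf13e12 : lie_br f13 e12 = - f23. Proof. mxsolve. Qed.
Lemma br15 : lie_br (lie_br f13 e12) e12 = 0. Proof. rewrite brf13e12; mxsolve. Qed.
Lemma br16 : lie_br f13 e23 = f12. Proof. mxsolve. Qed.
Lemma tr2 : \tr (f13 *m e23) = 0. Proof. trsolve. Qed.
Lemma br17 : lie_br f12 e23 = 0. Proof. mxsolve. Qed.
Lemma brHT : lie_br f13 e13 = HT. Proof. mxsolve. Qed.
Lemma brHA : lie_br e13 f13 = HA. Proof. mxsolve. Qed.
Lemma sl3_HT : in_sl3 HT. Proof. trsolve. Qed.
Lemma sl3_HA : in_sl3 HA. Proof. trsolve. Qed.
Lemma tr3 : \tr (f13 *m e13) = 1. Proof. trsolve. Qed.
Lemma brf23 : lie_br e12 f13 = f23. Proof. mxsolve. Qed.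
Lemma brf12 : lie_br e23 f13 = - f12. Proof. mxsolve. Qed.
Lemma brHAe12 : lie_br HA e12 = e12. Proof. mxsolve. Qed.
Lemma brHAe23 : lie_br HA e23 = e23. Proof. mxsolve. Qed.
Lemma brE12HA : lie_br e12 HA = - e12. Proof. mxsolve. Qed.
Lemma brE23HA : lie_br e23 HA = - e23. Proof. mxsolve. Qed.
Lemma sl3_Z a (x : 'M[C]_3) : in_sl3 x -> in_sl3 (a *: x).
Proof. by rewrite /in_sl3 linearZ /= => ->; rewrite mulr0. Qed.
Lemma brf13 : lie_br f12 f23 = f13. Proof. mxsolve. Qed.

(* weights: a = alpha1, b = alpha2 *)
Lemma wH1 : [/\ lie_br H1 e12 = 2 *: e12, lie_br H1 f12 = (- 2) *: f12,
   lie_br H1 e23 = (-1) *: e23 & lie_br H1 e13 = (2 + -1) *: e13].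
Proof. split; mxsolve. Qed.
Lemma wH2 : [/\ lie_br H2 e12 = (-1) *: e12, lie_br H2 f12 = (- -1) *: f12,
   lie_br H2 e23 = 2 *: e23 & lie_br H2 e13 = (-1 + 2) *: e13].
Proof. split; mxsolve. Qed.
Lemma wHt : [/\ lie_br HT e12 = (-1) *: e12,
   lie_br HT f12 = (- -1) *: f12,
   lie_br HT e23 = (-1) *: e23 &
   lie_br HT e13 = (-1 + -1) *: e13].
Proof. split; mxsolve. Qed.

Lemma dec_nplus (x : 'M[C]_3) : in_nplus x ->
  x = x i0 i1 *: e12 + (x i1 i2 *: e23 + (- x i0 i2) *: e13).
Proof.
move=> Hx; have h00 := Hx i0 i0 isT; have h11 := Hx i1 i1 isT; have h22 := Hx i2 i2 isT.
have h10 := Hx i1 i0 isT; have h20 := Hx i2 i0 isT; have h21 := Hx i2 i1 isT.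
rewrite /e12 /e23 /e13.
apply/matrixP => i j; have [->|->|->] := ord3P i; have [->|->|->] := ord3P j;
  rewrite ?mxE /= ?h00 ?h11 ?h22 ?h10 ?h20 ?h21 ?mulr1n ?mulr0n; ring.
Qed.

Lemma dec_sl3 (x : 'M[C]_3) : in_sl3 x ->
  x = x i0 i1 *: e12 + (x i1 i2 *: e23 + ((- x i0 i2) *: e13 + (x i1 i0 *: f12
    + (x i2 i1 *: f23 + ((- x i2 i0) *: f13 + (x i0 i0 *: H1 + (x i0 i0 + x i1 i1) *: H2)))))).
Proof.
rewrite /in_sl3 /mxtrace sum3 => Htr.
have Ht : x i2 i2 = - x i0 i0 - x i1 i1 by rewrite -[LHS]subr0 -Htr; ring.
rewrite /e12 /e23 /e13 /f12 /f23 /f13 /H1 /H2.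
apply/matrixP => i j; have [->|->|->] := ord3P i; have [->|->|->] := ord3P j;
  rewrite ?mxE /= ?Ht ?mulr1n ?mulr0n; ring.
Qed.

Lemma dec_cartan (h : 'M[C]_3) : in_cartan h -> h = h i0 i0 *: H1 + (h i0 i0 + h i1 i1) *: H2.
Proof.
case=> /dec_sl3 Hd Hoff; rewrite [LHS]Hd.
rewrite !(Hoff i0 i1 isT) !(Hoff i1 i2 isT) !(Hoff i0 i2 isT) !(Hoff i1 i0 isT).
rewrite !(Hoff i2 i1 isT) !(Hoff i2 i0 isT) !oppr0 !scale0r !add0r.
done.
Qed.

End Mx.

Ltac sl3t := first [ exact: sl3_e12 | exact: sl3_e23 | exact: sl3_e13 | exact: sl3_f12
  | exact: sl3_f23 | exact: sl3_f13 | exact: sl3_H1 | exact: sl3_H2 | exact: sl3_HA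
  | exact: sl3_HT | exact: sl3_br | exact: sl3_0 ].

Ltac sl3tt := repeat first [apply: sl3_lin | apply: sl3_Z]; sl3t.

Section Act.
Variable R : realType.
Local Notation C := (CC R).
Local Notation e12 := (e12 R). Local Notation e23 := (e23 R). Local Notation e13 := (e13 R).
Local Notation f12 := (f12 R). Local Notation f23 := (f23 R). Local Notation f13 := (f13 R).
Local Notation H1 := (H1 R). Local Notation H2 := (H2 R).
Local Notation HA := (HA R). Local Notation HT := (HT R).
Variable M : lmodType C.
Variable act : 'M[C]_3 -> int -> M -> M.
Variable k : C.
Hypothesis Haff : affine_module k act.

Lemma act_lin x m : in_sl3 x -> lin (act x m).
Proof. by case: Haff => _ H2 _ Hx a u v; apply: H2. Qed.

Lemma act_lin1 a x y m u : in_sl3 x -> in_sl3 y ->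
  act (a *: x + y) m u = a *: act x m u + act y m u.
Proof. by case: Haff => H1 _ _ Hx Hy; apply: H1. Qed.

Lemma act0 m u : act 0 m u = 0.
Proof.
have := act_lin1 1 m u (sl3_0 R) (sl3_0 R); rewrite scaler0 add0r scale1r => H.
by apply: (addrI (act 0 m u)); rewrite addr0 -H.
Qed.

Lemma actZ a x m u : in_sl3 x -> act (a *: x) m u = a *: act x m u.
Proof. by move=> Hx; have := act_lin1 a m u Hx (sl3_0 R); rewrite !addr0 act0 addr0. Qed.

Lemma actN x m u : in_sl3 x -> act (- x) m u = - act x m u.
Proof. by move=> Hx; rewrite -(scaleN1r x) actZ // scaleN1r. Qed.

Lemma comm x y m p u : in_sl3 x -> in_sl3 y ->
  act x m (act y p u) = act y p (act x m u) + act (lie_br x y) (m + p) u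
    + ((m%:~R * (if m + p == 0 then 1 else 0) * \tr (x *m y) * k) : C) *: u.
Proof.
case: Haff => _ _ H3 Hx Hy.
by rewrite -addrA -(H3 x y m p u Hx Hy) addrC subrK.
Qed.

Lemma comm0 x y p u : in_sl3 x -> in_sl3 y ->
  act x 0 (act y p u) = act y p (act x 0 u) + act (lie_br x y) p u.
Proof. by move=> Hx Hy; rewrite comm // !mul0r scale0r addr0 add0r. Qed.

Lemma commz x y m p u : in_sl3 x -> in_sl3 y -> lie_br x y = 0 ->
  (m + p != 0) || (m == 0) -> act x m (act y p u) = act y p (act x m u).
Proof.
move=> Hx Hy Hb /orP Hm; rewrite comm // Hb act0 addr0.
case: Hm => [/negPf -> | /eqP ->]; by rewrite ?mulr0 ?mul0r ?scale0r ?addr0.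
Qed.


Variable n : nat.
Variable w : M.
Hypothesis Hvac : vacuum_like act w.

Local Notation E := (act e12 (-1)).
Local Notation F0 := (act f12 0).
Local Notation A := (act e13 (-1)).
Local Notation B := (act e23 (-1)).
Definition T i j l := iter i A (iter j B (iter l F0 (iter n E w))).

Let lE : lin E := act_lin (-1) (sl3_e12 R).
Let lF0 : lin F0 := act_lin 0 (sl3_f12 R).
Let lA : lin A := act_lin (-1) (sl3_e13 R).
Let lB : lin B := act_lin (-1) (sl3_e23 R).

Lemma vac x m : in_sl3 x -> (0 <= m)%R -> act x m w = 0.
Proof. by move=> Hx Hm; apply: Hvac. Qed.

Lemma eig_step hh y c p u : in_sl3 hh -> in_sl3 y -> lie_br hh y = c *: y ->
  act hh 0 (act y p u) = act y p (act hh 0 u) + c *: act y p u.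
Proof. by move=> Hh Hy Hb; rewrite comm0 // Hb actZ. Qed.

Lemma BA u : B (A u) = A (B u).
Proof. by apply: commz; try sl3t; rewrite ?br7. Qed.

Lemma iterBA j u : iter j B (A u) = A (iter j B u).
Proof. by symmetry; apply: comm_iter => v; rewrite BA. Qed.

Lemma wt_T hh a b i j l : in_sl3 hh -> lie_br hh e12 = a *: e12 ->
  lie_br hh f12 = (- a) *: f12 -> lie_br hh e23 = b *: e23 ->
  lie_br hh e13 = (a + b) *: e13 ->
  act hh 0 (T i j l) = (0 + n%:R * a + l%:R * (- a) + j%:R * b + i%:R * (a + b)) *: T i j l.
Proof.
move=> Hh H12 Hf12 H23 H13; rewrite /T.
have Hs y c p : in_sl3 y -> lie_br hh y = c *: y -> forall u,
    act hh 0 (act y p u) = act y p (act hh 0 u) + c *: act y p u.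
  by move=> Hy Hb u; apply: eig_step.
apply: (eigen_iter _ lA (Hs _ _ _ (sl3_e13 R) H13)).
apply: (eigen_iter _ lB (Hs _ _ _ (sl3_e23 R) H23)).
apply: (eigen_iter _ lF0 (Hs _ _ _ (sl3_f12 R) Hf12)).
apply: (eigen_iter _ lE (Hs _ _ _ (sl3_e12 R) H12)).
by rewrite vac // scale0r.
Qed.

Lemma integ j m : (2 * j < m)%N -> iter m F0 (iter j E w) = 0.
Proof.
elim: j m => [|j IH] m Hm.
  by case: m Hm => // m _; rewrite iterSr vac //; try sl3t; rewrite iter0.
case: m Hm => [|[|m]] // Hm.
have Hx1 := sl3_br f12 e12.
have Hx2 := sl3_br f12 (lie_br f12 e12).
rewrite (ad3_iter m (iter j E w) lF0 (X := E) (X1 := act (lie_br f12 e12) (-1))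
   (X2 := act (lie_br f12 (lie_br f12 e12)) (-1))).
- rewrite !IH; try by rewrite mulnS in Hm; lia.
  by rewrite (lin0 lE) !(lin0 (act_lin _ _)) // !scaler0 !addr0.
- by move=> u; rewrite comm0 //; sl3t.
- by move=> u; rewrite comm0 //; sl3t.
- by move=> u; apply: commz; try sl3t; first [exact: br13 | by [] | by rewrite eqxx orbT].
- exact: act_lin.
- exact: act_lin.
Qed.

Lemma Dx12 : act e12 0 (iter n E w) = 0.
Proof.
rewrite (comm_iter (D := act e12 0) (X := E)); first by rewrite vac //; try sl3t; rewrite iter0.
by move=> u; apply: commz; try sl3t; first [exact: br_self | by [] | by rewrite eqxx orbT].
Qed.

Lemma H1x : act H1 0 (iter n E w) = (0 + n%:R * 2) *: iter n E w.
Proof.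
have [h1 _ _ _] := wH1 R.
apply: (eigen_iter _ lE); first by move=> u; apply: eig_step => //; sl3t.
by rewrite vac ?scale0r //; sl3t.
Qed.

Lemma D12_T t : act e12 0 (T t (2 * n - t) t) =
  (t%:R * ((0 + n%:R * 2) - t%:R + 1)) *: T t (2 * n - t) t.-1
  - (2 * n - t)%:R *: T t.+1 (2 * n - t).-1 t.
Proof.
have [_ hf _ _] := wH1 R.
rewrite /T (comm_iter (D := act e12 0) (X := A)); last first.
  by move=> u; apply: commz; try sl3t; first [exact: br1 | by [] | by rewrite eqxx orbT].
rewrite (commY_iter (Y := act (lie_br e12 e23) (-1)) _ _ lB); first last.
- by move=> u; apply: commz; try sl3t; first [exact: br2 | by [] | by rewrite eqxx orbT].
- by move=> u; rewrite comm0 //; sl3t.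
rewrite (sl2_iter (H := act H1 0) _ lF0 _ _ Dx12 H1x); first last.
- move=> u; rewrite (eig_step 0 u _ _ hf); try sl3t.
  by rewrite scaleNr.
- by move=> u; rewrite comm0 ?brH1 //; sl3t.
rewrite br3 actN; last by sl3t.
rewrite (linD (lin_iter _ lA)) !(linZ (lin_iter _ lA)) (linZ (lin_iter _ lB)).
rewrite (linN (lin_iter _ lB)) (linN (lin_iter _ lA)) iterBA -iterSr scalerN.
by rewrite (linZ (lin_iter t lA)).
Qed.

Lemma fact_neq0 t : (t`!)%:R != 0 :> C.
Proof. by rewrite pnatr_eq0 -lt0n fact_gt0. Qed.

Lemma natS_neq0 t : (t.+1)%:R != 0 :> C.
Proof. by rewrite pnatr_eq0. Qed.

Lemma e12_v : act e12 0 (v2n act n w) = 0.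
Proof.
have Lx := act_lin 0 (sl3_e12 R).
rewrite /v2n (lin_sum Lx).
set g := fun t => ((2 * n - t)%:R / (t`!)%:R) *: T t.+1 (2 * n - t).-1 t.
transitivity (\sum_(t < (2 * n).+1) ((t`!)%:R^-1 *: act e12 0 (T t (2 * n - t) t))).
  by apply: eq_bigr => t _; rewrite (linZ Lx).
transitivity (- g (2 * n)); last by rewrite /g subnn mul0r scale0r oppr0.
apply: (tele (g := fun t => - g t) (a := fun t : nat => (t`!)%:R^-1 *: act e12 0 (T t (2 * n - t) t))).
- by rewrite D12_T /g fact0 invr1 scale1r mul0r scale0r sub0r mulr1.
move=> t Ht; rewrite D12_T /g -[(2 * n - t).-1]subnS opprK [RHS]addrC scalerBr !scalerA.
congr (_ *: _ - _ *: _); last by rewrite mulrC.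
have Hf := fact_neq0 t; have Hs := natS_neq0 t.
rewrite factS natrM natrB; last by apply: ltnW.
rewrite natrM -(natr1 t); field.
by rewrite Hf natr1 Hs.
Qed.

Definition T2 i j l := iter i A (iter j B (iter l F0 (iter n.-1 E w))).

Lemma Dx23 : act e23 0 (iter n E w) = n%:R *: A (iter n.-1 E w).
Proof.
rewrite (commY_iter (Y := A) _ _ lE); first last.
- by move=> u; apply: commz; try sl3t; first [exact: br10 | by [] | by rewrite eqxx orbT].
- by move=> u; rewrite comm0 ?br9 //; sl3t.
rewrite vac ?iter0 ?add0r //; last by sl3t.
congr (_ *: _); symmetry; apply: comm_iter => u.
by apply: commz; try sl3t; first [exact: br10 | by [] | by rewrite eqxx orbT].
Qed.

Lemma D23_T t : act e23 0 (T t (2 * n - t) t) =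
  n%:R *: (T2 t.+1 (2 * n - t) t - t%:R *: T2 t (2 * n - t).+1 t.-1).
Proof.
rewrite /T (comm_iter (D := act e23 0) (X := A)); last first.
  by move=> u; apply: commz; try sl3t; first [exact: br7 | by [] | by rewrite eqxx orbT].
rewrite (comm_iter (D := act e23 0) (X := B)); last first.
  by move=> u; apply: commz; try sl3t; first [exact: br_self | by [] | by rewrite eqxx orbT].
rewrite (comm_iter (D := act e23 0) (X := F0)); last first.
  by move=> u; apply: commz; try sl3t; first [exact: br8 | by [] | by rewrite eqxx orbT].
rewrite Dx23 (linZ (lin_iter _ lF0)).
rewrite (commY_iter' (Y := act (lie_br f12 e13) (-1)) _ _ lF0).
all: try (by move=> u; apply: commz; try sl3t; first [by rewrite br11 br12 | by [] | by rewrite eqxx orbT]).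
all: try (by move=> u; rewrite comm0 //; sl3t).
all: try (by apply: act_lin; sl3t).
rewrite br11 actN; last by sl3t.
rewrite (linZ (lin_iter _ lB)) (linZ (lin_iter _ lA)) (linD (lin_iter _ lB)) (linD (lin_iter _ lA)).
rewrite (linZ (lin_iter _ lB)) (linZ (lin_iter _ lA)) (linN (lin_iter _ lB)) (linN (lin_iter _ lA)).
by rewrite /T2 iterBA -!iterSr scalerN.
Qed.

Lemma e23_v : (0 < n)%N -> act e23 0 (v2n act n w) = 0.
Proof.
move=> n0.
have Lx := act_lin 0 (sl3_e23 R).
rewrite /v2n (lin_sum Lx).
set h := fun t => (n%:R / (t`!)%:R) *: T2 t.+1 (2 * n - t) t.
transitivity (\sum_(t < (2 * n).+1) ((t`!)%:R^-1 *: act e23 0 (T t (2 * n - t) t))).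
  by apply: eq_bigr => t _; rewrite (linZ Lx).
transitivity (h (2 * n)).
  apply: (tele (a := fun t : nat => (t`!)%:R^-1 *: act e23 0 (T t (2 * n - t) t))).
  - by rewrite D23_T /h fact0 invr1 scale1r scale0r subr0 mulr1.
  move=> t Ht; rewrite D23_T /h subnSK // !scalerA scalerBr !scalerA.
  congr (_ *: _ - _ *: _); first by rewrite mulrC.
  have Hf := fact_neq0 t; have Hs := natS_neq0 t.
  rewrite factS natrM; field.
  by rewrite Hf ?nat1r ?natr1 Hs.
rewrite /h /T2 subnn /= integ ?(iter0 lA) ?(lin0 lA) ?scaler0 //.
lia.
Qed.

Lemma m1 : (1 + -1 : int) = 0. Proof. by []. Qed.

Lemma D13_E u : act f13 1 (E u) = E (act f13 1 u) + act (lie_br f13 e12) 0 u.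
Proof. by rewrite comm ?m1 ?tr1 ?mulr0 ?mul0r ?scale0r ?addr0 //; sl3t. Qed.

Lemma D13_B u : act f13 1 (B u) = B (act f13 1 u) + F0 u.
Proof. by rewrite comm ?m1 ?tr2 ?br16 ?mulr0 ?mul0r ?scale0r ?addr0 //; sl3t. Qed.

Lemma D13_A u : act f13 1 (A u) = A (act f13 1 u) + act HT 0 u + k *: u.
Proof. by rewrite comm ?m1 ?tr3 ?brHT ?mul1r //; sl3t. Qed.

Lemma Dx13 : act f13 1 (iter n E w) = 0.
Proof.
rewrite (commY_iter (Y := act (lie_br f13 e12) 0) _ _ lE).
all: try (by move=> u; apply: commz; try sl3t; first [exact: br15 | by [] | by rewrite eqxx orbT]).
all: try (by move=> u; rewrite D13_E).
by rewrite !vac ?iter0 ?scaler0 ?addr0 //; sl3t.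
Qed.

Lemma Du13 t : act f13 1 (iter t F0 (iter n E w)) = 0.
Proof.
rewrite (comm_iter (D := act f13 1) (X := F0)); first by rewrite Dx13 iter0.
by move=> u; apply: commz; try sl3t; first [exact: br14 | by [] | by rewrite eqxx orbT].
Qed.

Definition cf (mu : C) (j : nat) := j%:R * (k + mu - (j%:R - 1)).

Lemma D13_T t : act f13 1 (T t (2 * n - t) t) =
  (2 * n - t)%:R *: T t (2 * n - t).-1 t.+1 +
  cf (0 + n%:R * -1 + t%:R * (- -1) + (2 * n - t)%:R * -1 + 0%:R * (-1 + -1)) t
    *: T t.-1 (2 * n - t) t.
Proof.
have [w12 wf12 w23 w13] := wHt R.
rewrite /T (theta_iter (H := act HT 0) (c := -1 + -1) (k := k)
   (mu := 0 + n%:R * -1 + t%:R * (- -1) + (2 * n - t)%:R * -1 + 0%:R * (-1 + -1))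
   (cf := cf (0 + n%:R * -1 + t%:R * (- -1) + (2 * n - t)%:R * -1 + 0%:R * (-1 + -1))) _ lA).
- rewrite (commY_iter (Y := F0) _ _ lB); last first.
  + by move=> u; apply: commz; try sl3t; first [exact: br17 | by [] | by rewrite eqxx orbT].
  + by move=> u; rewrite D13_B.
  by rewrite Du13 (iter0 lB) add0r (linZ (lin_iter _ lA)).
- by move=> u; apply: eig_step; try sl3t.
- by move=> u; rewrite D13_A.
- exact: (wt_T 0 (2 * n - t) t (sl3_HT R) w12 wf12 w23 w13).
- by rewrite /cf mul0r.
- by move=> j; rewrite /cf -(natr1 j); ring.
Qed.

Lemma f13_v : k = n%:R - 2 -> act f13 1 (v2n act n w) = 0.
Proof.
move=> Hk.
have Lx := act_lin 1 (sl3_f13 R).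
rewrite /v2n (lin_sum Lx).
set g := fun t => ((2 * n - t)%:R / (t`!)%:R) *: T t (2 * n - t).-1 t.+1.
transitivity (\sum_(t < (2 * n).+1) ((t`!)%:R^-1 *: act f13 1 (T t (2 * n - t) t))).
  by apply: eq_bigr => t _; rewrite (linZ Lx).
transitivity (g (2 * n)); last by rewrite /g subnn mul0r scale0r.
apply: (tele (a := fun t : nat => (t`!)%:R^-1 *: act f13 1 (T t (2 * n - t) t))).
- by rewrite D13_T /g /cf fact0 invr1 !scale1r mul0r scale0r addr0 mulr1.
move=> t Ht; rewrite D13_T /g -[(2 * n - t).-1]subnS scalerDr !scalerA -scaleNr.
congr (_ *: _ + _ *: _); first by rewrite mulrC.
have Hf := fact_neq0 t; have Hs := natS_neq0 t.
rewrite /cf Hk factS natrM !natrB //; last by apply: ltnW.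
rewrite natrM -(natr1 t); field.
by rewrite Hf ?nat1r ?natr1 Hs.
Qed.

Lemma wt_v hh a b : in_sl3 hh -> lie_br hh e12 = a *: e12 ->
  lie_br hh f12 = (- a) *: f12 -> lie_br hh e23 = b *: e23 ->
  lie_br hh e13 = (a + b) *: e13 ->
  act hh 0 (v2n act n w) = (n%:R * a + (2 * n)%:R * b) *: v2n act n w.
Proof.
move=> Hh H12 Hf12 H23 H13.
rewrite /v2n (lin_sum (act_lin 0 Hh)) scaler_sumr; apply: eq_bigr => t _.
have Ht : (t <= 2 * n)%N by rewrite -ltnS.
rewrite (linZ (act_lin 0 Hh)).
have -> := wt_T t (2 * n - t) t Hh H12 Hf12 H23 H13.
rewrite !scalerA; congr (_ *: _).
rewrite natrB // natrM; ring.
Qed.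

End Act.

Section Gen.
Variable R : realType.
Local Notation C := (CC R).
Local Notation e12 := (e12 R). Local Notation e23 := (e23 R). Local Notation e13 := (e13 R).
Local Notation f12 := (f12 R). Local Notation f23 := (f23 R). Local Notation f13 := (f13 R).
Local Notation H1 := (H1 R). Local Notation H2 := (H2 R).
Local Notation HA := (HA R). Local Notation HT := (HT R).
Variable M : lmodType C.
Variable act : 'M[C]_3 -> int -> M -> M.
Variable k : C.
Hypothesis Haff : affine_module k act.
Variable v : M.

Lemma derive0 x y p : in_sl3 x -> in_sl3 y -> act x 0 v = 0 -> act y p v = 0 ->
  act (lie_br x y) p v = 0.
Proof.
move=> Hx Hy H0 H1; have := comm0 Haff p v Hx Hy.
by rewrite H1 H0 (lin0 (act_lin Haff 0 Hx)) (lin0 (act_lin Haff p Hy)) add0r => <-.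
Qed.

Lemma derive1 x y (m : nat) : in_sl3 x -> in_sl3 y -> act x 1 v = 0 -> act y m v = 0 ->
  act (lie_br x y) m.+1 v = 0.
Proof.
move=> Hx Hy H0 H1; have := comm Haff 1 m v Hx Hy.
have e : (1 + m%:Z = m.+1%:Z) by rewrite -add1n PoszD.
rewrite e H1 H0 (lin0 (act_lin Haff 1 Hx)) (lin0 (act_lin Haff m Hy)) add0r.
have -> : (m.+1%:Z == 0) = false by [].
by rewrite /= mulr0 !mul0r scale0r addr0 => <-.
Qed.

Lemma negz (a : M) : - a = 0 -> a = 0.
Proof. by move/eqP; rewrite oppr_eq0 => /eqP. Qed.

Definition Q (m : int) := act e12 m v = 0 /\ act e23 m v = 0 /\ act e13 m v = 0 /\ act f12 m v = 0 /\ act f23 m v = 0 /\ act f13 m v = 0 /\ act H1 m v = 0 /\ act H2 m v = 0.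

Hypothesis H12 : act e12 0 v = 0.
Hypothesis H23 : act e23 0 v = 0.
Hypothesis H13 : act f13 1 v = 0.

Lemma e13_0 : act e13 0 v = 0.
Proof. by rewrite -br9; apply: derive0 => //; sl3t. Qed.

Lemma HA1 : act HA 1 v = 0.
Proof. rewrite -brHA; apply: derive0 => //; try sl3t; exact: e13_0. Qed.

Lemma Q1 : Q 1.
Proof.
have f23_1 : act f23 1 v = 0 by rewrite -brf23; apply: derive0 => //; sl3t.
have f12_1 : act f12 1 v = 0.
  by apply: negz; rewrite -(actN Haff) -?brf12; try sl3t; apply: derive0 => //; sl3t.
have e12_1 : act e12 1 v = 0.
  by apply: negz; rewrite -(actN Haff) -?brE12HA; try sl3t; apply: derive0 => //; try sl3t; exact: HA1.
have e23_1 : act e23 1 v = 0.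
  by apply: negz; rewrite -(actN Haff) -?brE23HA; try sl3t; apply: derive0 => //; try sl3t; exact: HA1.
split => //; split => //; split.
  by rewrite -br9; apply: derive0 => //; sl3t.
do 3!(split => //); split.
  by rewrite -brH1; apply: derive0 => //; sl3t.
by rewrite -brH2; apply: derive0 => //; sl3t.
Qed.

Lemma QS (m : nat) : Q m -> Q m.+1.
Proof.
have [e12_1 [e23_1 [e13_1 [f12_1 [f23_1 [f13_1 [h1_1 h2_1]]]]]]] := Q1.
move=> [a1 [a2 [a3 [a4 [a5 [a6 [a7 a8]]]]]]].
split; first by rewrite -brHAe12; apply: derive1 => //; try sl3t; exact: HA1.
split; first by rewrite -brHAe23; apply: derive1 => //; try sl3t; exact: HA1.
split; first by rewrite -br9; apply: derive1 => //; sl3t.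
split; first by rewrite -br16; apply: derive1 => //; sl3t.
split; first by rewrite -brf23; apply: derive1 => //; sl3t.
split; first by rewrite -brf13; apply: derive1 => //; sl3t.
split; first by rewrite -brH1; apply: derive1 => //; sl3t.
by rewrite -brH2; apply: derive1 => //; sl3t.
Qed.


Lemma gen_pos x m : in_sl3 x -> (0 < m)%R -> act x m v = 0.
Proof.
move=> Hx; case: m => // m Hm.
have : Q m.
  case: m Hm => // m _; elim: m => [|m IH]; first exact: Q1.
  exact: QS.
move=> [a1 [a2 [a3 [a4 [a5 [a6 [a7 a8]]]]]]].
rewrite (dec_sl3 Hx) !(act_lin1 Haff); try sl3tt.
rewrite !(actZ Haff); try sl3t.
by rewrite a1 a2 a3 a4 a5 a6 a7 a8 !scaler0 !addr0.
Qed.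

Lemma gen_nplus x : in_nplus x -> act x 0 v = 0.
Proof.
move=> Hx; rewrite (dec_nplus Hx) !(act_lin1 Haff); try sl3tt.
by rewrite (actZ Haff) ?H12 ?H23 ?e13_0 ?scaler0 ?addr0 //; sl3t.
Qed.

End Gen.

Unset Implicit Arguments.

Theorem theorem6p1 (R : realType) (n : nat) (M : lmodType (CC R))
    (act : 'M[CC R]_3 -> int -> M -> M) (w : M) :
  (0 < n)%N ->
  affine_module (n%:R - 2) act ->
  vacuum_like act w ->
  singular act (v2n act n w).
Proof.
move=> n0 Haff Hvac.
have H12 := e12_v Haff n Hvac.
have H23 := e23_v Haff Hvac n0.
have H13 := f13_v Haff Hvac (erefl _).
split.
- exists (fun h => h i0 i0 * (n%:R * 2 + (2 * n)%:R * -1)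
                   + (h i0 i0 + h i1 i1) * (n%:R * -1 + (2 * n)%:R * 2)).
  move=> h Hh; rewrite {1}(dec_cartan Hh) (act_lin1 Haff); try sl3tt.
  have [a1 a2 a3 a4] := wH1 R; have [b1 b2 b3 b4] := wH2 R.
  rewrite !(actZ Haff); try sl3t.
  rewrite (wt_v Haff n Hvac _ a1 a2 a3 a4); last by sl3t.
  rewrite (wt_v Haff n Hvac _ b1 b2 b3 b4); last by sl3t.
  by rewrite !scalerA -scalerDl.
- by move=> x Hx; apply: (gen_nplus Haff H12 H23).
- by move=> x m Hx Hm; apply: (gen_pos Haff H12 H23 H13).
Qed.
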